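(* Let $T$ be a $\pi$-increasing tree whose vertex-set $\mathcal{S}$ consists of two or more blocks of $\pi$; let $M$ be its maximum vertex and $m=\max(\mathcal{S}\setminus\pi^M)$ its second maximum vertex. (a) If $T$ is reducible, then $T$ can be written uniquely as $T=\mathrm{spl}(T_1,M;T_2,t)$ where $T_1,T_2$ are $\pi$-increasing trees such that $M$ is a vertex of $T_1$, $t$ is a vertex of $T_2$, and $T_1$ is irreducible. Moreover, if $1$ is a vertex of $T$, then $1$ is a vertex of $T_2$. (b) If $T$ is irreducible, then $T$ can be written uniquely as $T=\mathrm{spl}(T_1,m;T_2,t)$ where $T_1,T_2$ are $\pi$-increasing trees such that $m$ is a vertex of $T_1$, $t$ and $M$ are vertices of $T_2$ with $t<m$, and $T_1$ and $T_2$ are both irreducible.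
   Context: Standing assumptions: $r\ge2$ and $\pi$ is a set partition of $\{1,\dots,r\}$ having $\{1\}$ as a block; its blocks are $\pi_i$ with maxima $\mu_i$; $\pi^x$ denotes the block containing $x$. An unordered increasing tree is a rooted tree on distinct positive integers, sons unordered, each son larger than its father. A $\pi$-increasing tree is an unordered increasing tree $T$ whose vertex-set is a union of blocks of $\pi$ and such that for any two elements $i<j$ of a same block of $\pi$ contained in $V(T)$, $i$ is an ancestor of $j$ in $T$. $v$-decomposition: for a vertex $v$ of $T$ with chain $a_1<\dots<a_\ell=v$ from the root to $v$, removing the chain edges leaves components $T^{(a_j)}$ rooted at $a_j$. Splice: for unordered increasing trees $T_1,T_2$ with disjoint vertex-sets and $v_1\in V(T_1)$, $v_2\in V(T_2)$, $v_1>v_2$, $\mathrm{spl}(T_1,v_1;T_2,v_2)$ is the tree on $V(T_1)\cup V(T_2)$ obtained by merging the root-to-$v_1$ chain of $T_1$ and the root-to-$v_2$ chain of $T_2$ into one increasing chain (ending at $v_1$) and attaching at each chain vertex its component from the $v_1$-decomposition of $T_1$ or the $v_2$-decomposition of $T_2$. $v$-dependence graph $G_v(T)$: directed graph on the blocks of $\pi$ contained in $V(T)$; for each such block $\pi_i$ whose maximum $\mu_i$ is not on the chain $a_1,\dots,a_\ell$, $\mu_i$ is a non-root vertex of a unique $T^{(a_j)}$ and there is an edge (possibly a loop) $\pi_i\to\pi^{a_j}$; no other edges. A $\pi$-increasing tree with maximum vertex $M$ is irreducible if $G_M(T)$ is connected (ignoring directions), reducible otherwise. *)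

(* Defs.v *)
From HB Require Import structures.
From mathcomp Require Import all_boot.
Set Implicit Arguments. Unset Strict Implicit. Unset Printing Implicit Defensive.

(* Vertices are labels in {1,...,r}, living in 'I_r.+1 (the label 0 is never
   used: trees and blocks are required to avoid it). *)

Section PiTrees.
Variable r : nat.
Notation V := ('I_r.+1).

(* A rooted unordered tree on a vertex set tV, encoded by its parent map:
   the root is its own parent, and tpar is the identity off tV. *)
Record tree := Tree { tV : {set V}; tpar : {ffun V -> V} }.

Definition maxv (S : {set V}) : V := inord (\max_(i in S) (i : nat)).

Definition is_incr_tree (T : tree) : bool :=
  [&& tV T != set0,
      #|[set x in tV T | tpar T x == x]| == 1,
      [forall x in tV T, (tpar T x != x) ==> ((tpar T x \in tV T) && (tpar T x < x))]
    & [forall x in ~: tV T, tpar T x == x]].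

Definition ancestor (T : tree) (a x : V) : bool := fconnect (tpar T) x a.

Definition pi_incr (P : {set {set V}}) (T : tree) : bool :=
  [&& is_incr_tree T,
      tV T \subset [set i : V | 0 < i],
      [forall B in P, (B \subset tV T) || [disjoint B & tV T]]
    & [forall B in P, (B \subset tV T) ==>
         [forall i in B, forall j in B, (i < j) ==> ancestor T i j]]].

Definition chain (T : tree) (v : V) : {set V} :=
  [set a in tV T | ancestor T a v].

(* the chain vertex a_j such that x lies in the component T^(a_j) of the
   v-decomposition: the deepest (= largest) chain vertex that is an ancestor of x *)
Definition anchor (T : tree) (v x : V) : V :=
  maxv (chain T v :&: [set a | ancestor T a x]).

Definition spl (T1 : tree) (v1 : V) (T2 : tree) (v2 : V) : tree :=
  let C := chain T1 v1 :|: chain T2 v2 in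
  Tree (tV T1 :|: tV T2)
    [ffun x => if x \in C then
                 (if [exists c in C, c < x] then maxv [set c in C | c < x] else x)
               else if x \in tV T1 then tpar T1 x
               else if x \in tV T2 then tpar T2 x
               else x].

Definition blocks_in (P : {set {set V}}) (T : tree) : {set {set V}} :=
  [set B in P | B \subset tV T].

Definition dep_edge (P : {set {set V}}) (T : tree) (v : V) (B B' : {set V}) : bool :=
  [&& B \in blocks_in P T, B' \in blocks_in P T,
      maxv B \notin chain T v
    & B' == pblock P (anchor T v (maxv B))].

Definition dep_connected (P : {set {set V}}) (T : tree) (v : V) : bool :=
  [forall B in blocks_in P T, forall B' in blocks_in P T,
     connect [rel X Y | dep_edge P T v X Y || dep_edge P T v Y X] B B'].

Definition irreducible (P : {set {set V}}) (T : tree) : bool :=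
  dep_connected P T (maxv (tV T)).

Definition reducible (P : {set {set V}}) (T : tree) : bool := ~~ irreducible P T.

End PiTrees.

(* Main.v *)
Require Import Defs.
From mathcomp Require Import all_boot zify.
Set Implicit Arguments. Unset Strict Implicit. Unset Printing Implicit Defensive.


Section Basics.
Variable r : nat.
Notation V := ('I_r.+1).
Implicit Types (S D W : {set V}) (T : tree r) (x y a b c v : V).

Lemma maxv_ge S x : x \in S -> x <= maxv S.
Proof.
move=> xS; rewrite /maxv inordK; first exact: leq_bigmax_cond.
by apply/bigmax_leqP => i _; rewrite -ltnS.
Qed.

Lemma maxv_in S x : x \in S -> maxv S \in S.
Proof.
move=> xS; have h : 0 < #|S| by apply/card_gt0P; exists x.
case: (eq_bigmax_cond (fun i : V => (i : nat)) h) => i0 i0S e.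
by rewrite /maxv e inord_val.
Qed.

Lemma maxv_eq S x : x \in S -> (forall y, y \in S -> y <= x) -> maxv S = x.
Proof.
move=> xS h; apply/val_inj/eqP; rewrite eqn_leq maxv_ge // andbT.
exact: h (maxv_in xS).
Qed.

Lemma maxv_sub S D : D \subset S -> maxv S \in D -> maxv S \in S -> maxv D = maxv S.
Proof.
move=> sub mD mS; apply: maxv_eq => // y yD; apply: maxv_ge; exact: (subsetP sub).
Qed.

Lemma maxv_ext S D : S =i D -> maxv S = maxv D.
Proof. by move=> e; congr maxv; apply/setP. Qed.

End Basics.


Section Anc.
Variable r : nat.
Notation V := ('I_r.+1).
Implicit Types (S D W : {set V}) (T : tree r) (x y a b c v : V).

Lemma ord_ind (Q : V -> Prop) : (forall x, (forall y, y < x -> Q y) -> Q x) -> forall x, Q x.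
Proof.
move=> h x; suff: forall n (y : V), y < n -> Q y by apply; exact: (ltnSn x).
elim=> [|n IH] y //; rewrite ltnS => le; apply: h => z lt; apply: IH; exact: leq_trans lt le.
Qed.

Lemma anc_unfold T a x :
  ancestor T a x = (a == x) || ((tpar T x != x) && ancestor T a (tpar T x)).
Proof.
rewrite /ancestor; apply/idP/idP.
  move/connectP=> [p pth ->]; elim: p x pth => [|y p IH] x /=; first by rewrite eqxx.
  move=> /andP[/eqP fx pth].
  case: (eqVneq (tpar T x) x) => [fxx|nfx] /=.
    have yx : y = x by rewrite -fx fxx.
    subst y; rewrite fxx in pth; move: (IH x pth); rewrite fxx eqxx /=. done.
  rewrite orbC; apply/orP; left; apply/connectP; exists p => //; by rewrite fx.
case/orP=> [/eqP->|/andP[_ h]]; first exact: connect0.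
by apply: connect_trans h; apply: connect1 => /=.
Qed.

Lemma anc_refl T x : ancestor T x x.
Proof. by rewrite anc_unfold eqxx. Qed.

Lemma anc_trans T a b c : ancestor T a b -> ancestor T b c -> ancestor T a c.
Proof. rewrite /ancestor => h1 h2; exact: connect_trans h2 h1. Qed.

Lemma anc_par T x : ancestor T (tpar T x) x.
Proof. rewrite anc_unfold; case: eqVneq => //= _; exact: anc_refl. Qed.

Lemma anc_neq T a x : ancestor T a x -> a != x -> ancestor T a (tpar T x).
Proof. by rewrite anc_unfold => /orP[/eqP->|/andP[]//]; rewrite eqxx. Qed.

Section Incr.
Variable T : tree r.
Hypothesis inc : is_incr_tree T.

Lemma par_out x : x \notin tV T -> tpar T x = x.
Proof. by case/and4P: inc => _ _ _ /forallP/(_ x); rewrite in_setC => /implyP h /h/eqP. Qed.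

Lemma par_in x : x \in tV T -> tpar T x != x -> (tpar T x \in tV T) && (tpar T x < x).
Proof. by case/and4P: inc => _ _ /forall_inP/(_ x) h _ /h/implyP. Qed.

Lemma par_lt x : tpar T x != x -> tpar T x < x.
Proof.
move=> h; case: (boolP (x \in tV T)) => xV; first by case/andP: (par_in xV h).
by move: h; rewrite par_out ?eqxx.
Qed.

Lemma par_le x : tpar T x <= x.
Proof. by case: (eqVneq (tpar T x) x) => [->//|/par_lt/ltnW]. Qed.

Lemma par_V x : x \in tV T -> tpar T x \in tV T.
Proof. by move=> xV; case: (eqVneq (tpar T x) x) => [->//|h]; case/andP: (par_in xV h). Qed.

Lemma anc_le a x : ancestor T a x -> a <= x.
Proof.
elim/ord_ind: x => x IH.
rewrite anc_unfold => /orP[/eqP->//|/andP[h1 h2]].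
have lt := par_lt h1; apply: leq_trans (ltnW lt); exact: IH.
Qed.

Lemma anc_V a x : ancestor T a x -> x \in tV T -> a \in tV T.
Proof.
elim/ord_ind: x => x IH.
rewrite anc_unfold => /orP[/eqP->//|/andP[h1 h2]] xV.
by apply: (IH _ (par_lt h1)) => //; exact: par_V.
Qed.

Lemma anc_antisym a b : ancestor T a b -> ancestor T b a -> a = b.
Proof. by move=> /anc_le h1 /anc_le h2; apply/val_inj/eqP; rewrite eqn_leq h1 h2. Qed.

Lemma anc_out a x : x \notin tV T -> ancestor T a x = (a == x).
Proof. by move=> xV; rewrite anc_unfold par_out // eqxx /= orbF. Qed.

Lemma anc_total a b x : ancestor T a x -> ancestor T b x -> ancestor T a b || ancestor T b a.
Proof.
elim/ord_ind: x => x IH.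
rewrite (anc_unfold _ a) => /orP[/eqP->|/andP[h1 h2]]; first by move=> ->; rewrite orbT.
rewrite anc_unfold => /orP[/eqP->|/andP[_ h3]]; first by rewrite (anc_trans h2 (anc_par _ _)).
exact: IH (par_lt h1) h2 h3.
Qed.

Lemma anc_total_le a b x : ancestor T a x -> ancestor T b x -> a <= b -> ancestor T a b.
Proof.
move=> h1 h2 le; case/orP: (anc_total h1 h2) => // h.
have e : a = b by apply/val_inj/eqP; rewrite eqn_leq le (anc_le h).
rewrite e; exact: anc_refl.
Qed.

Lemma root_ex : exists x0, [/\ x0 \in tV T, tpar T x0 = x0 &
   forall x, x \in tV T -> tpar T x = x -> x = x0].
Proof.
case/and4P: inc => _ /cards1P[x0 e] _ _.
have : x0 \in [set x in tV T | tpar T x == x] by rewrite e set11.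
rewrite inE => /andP[x0V /eqP fx0]; exists x0; split => // x xV fx.
by apply/set1P; rewrite -e inE xV fx eqxx.
Qed.

Lemma root_anc x0 x : x0 \in tV T -> tpar T x0 = x0 -> x \in tV T -> ancestor T x0 x.
Proof.
move=> x0V f0; case: root_ex => y0 [_ _ uniq].
rewrite (uniq _ x0V f0).
elim/ord_ind: x => x IH xV.
case: (eqVneq (tpar T x) x) => [fx|nfx]; first by rewrite -(uniq _ xV fx) anc_refl.
apply: anc_trans (anc_par _ _); apply: IH; [exact: par_lt | exact: par_V].
Qed.

End Incr.
End Anc.


Section Chains.
Variable r : nat.
Notation V := ('I_r.+1).
Implicit Types (S D W : {set V}) (T U : tree r) (x y a b c v : V).

Definition pr D x : V := if [exists c in D, c < x] then maxv [set c in D | c < x] else x.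

Lemma pr_ex D x : [exists c in D, c < x] ->
  [/\ pr D x \in D, pr D x < x & forall c, c \in D -> c < x -> c <= pr D x].
Proof.
move=> ex; rewrite /pr ex; case/exists_inP: ex => c0 c0D lt0.
have h : c0 \in [set c in D | c < x] by rewrite inE c0D.
have := maxv_in h; rewrite inE => /andP[-> ->]; split => // c cD lt.
by apply: maxv_ge; rewrite inE cD.
Qed.

Lemma pr_nex D x : ~~ [exists c in D, c < x] -> pr D x = x.
Proof. by rewrite /pr => /negbTE->. Qed.

Lemma anc_D U D : (forall x, x \in D -> tpar U x = pr D x) ->
  forall x, x \in D -> forall a, ancestor U a x = (a \in D) && (a <= x).
Proof.
move=> hD; elim/ord_ind=> x IH xD a.
rewrite anc_unfold hD //.
case: (boolP [exists c in D, c < x]) => ex.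
  case: (pr_ex ex) => pD plt pmax.
  have ne : pr D x != x by rewrite neq_ltn plt.
  rewrite ne /= IH //; apply/idP/idP.
    case/orP=> [/eqP->|/andP[aD le]]; first by rewrite xD leqnn.
    by rewrite aD (leq_trans le (ltnW plt)).
  case/andP=> aD le; case: (eqVneq a x) => //= ne2.
  rewrite aD /=; apply: pmax => //; rewrite ltn_neqAle le andbT.
  by apply/eqP => /val_inj /eqP; rewrite (negbTE ne2).
rewrite pr_nex // eqxx /= orbF; apply/idP/idP; first by move/eqP->; rewrite xD leqnn.
case/andP=> aD le; case: (eqVneq a x) => // ne2.
move: ex; rewrite negb_exists_in => /forall_inP/(_ a aD).
rewrite ltn_neqAle le andbT; case: eqP => // /val_inj /eqP.
by rewrite (negbTE ne2).
Qed.

Section InT.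
Variable T : tree r.
Hypothesis inc : is_incr_tree T.

Lemma chainP v a : (a \in chain T v) = (a \in tV T) && ancestor T a v.
Proof. by rewrite inE. Qed.

Lemma chain_V v a : a \in chain T v -> a \in tV T.
Proof. by rewrite chainP => /andP[]. Qed.

Lemma chain_anc v a : a \in chain T v -> ancestor T a v.
Proof. by rewrite chainP => /andP[]. Qed.

Lemma chain_le v a : a \in chain T v -> a <= v.
Proof. by move/chain_anc/(anc_le inc). Qed.

Lemma chain_self v : v \in tV T -> v \in chain T v.
Proof. by move=> vV; rewrite chainP vV anc_refl. Qed.

Lemma chain_root v x0 : v \in tV T -> x0 \in tV T -> tpar T x0 = x0 -> x0 \in chain T v.
Proof. by move=> vV x0V f0; rewrite chainP x0V (root_anc inc x0V f0 vV). Qed.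

Lemma chain_total v a b : a \in chain T v -> b \in chain T v -> a <= b -> ancestor T a b.
Proof. move=> /chain_anc h1 /chain_anc h2; exact: (anc_total_le inc h1 h2). Qed.

Lemma chain_par v x : v \in tV T -> x \in chain T v -> tpar T x = pr (chain T v) x.
Proof.
move=> vV xC; case: (eqVneq (tpar T x) x) => [fx|nfx].
  rewrite pr_nex // negb_exists_in; apply/forall_inP => c cC; rewrite -leqNgt.
  exact: (anc_le inc (root_anc inc (chain_V xC) fx (chain_V cC))).
have [pV plt] := andP (par_in inc (chain_V xC) nfx).
have pC : tpar T x \in chain T v by rewrite chainP pV (anc_trans (anc_par _ _) (chain_anc xC)).
have ex : [exists c in chain T v, c < x] by apply/exists_inP; exists (tpar T x).
case: (pr_ex ex) => qC qlt qmax; apply/val_inj/eqP; rewrite eqn_leq (qmax _ pC plt) /=.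
apply: (anc_le inc); apply: anc_neq; first exact: (chain_total qC xC (ltnW qlt)).
by rewrite neq_ltn qlt.
Qed.

Lemma anc_chain v x a : v \in tV T -> x \in chain T v ->
  ancestor T a x = (a \in chain T v) && (a <= x).
Proof. move=> vV xC; apply: (anc_D _ xC) => y; exact: chain_par. Qed.

Lemma chain_anc_closed v a x : x \in chain T v -> ancestor T a x -> a \in chain T v.
Proof.
move=> xC h; rewrite chainP (anc_V inc h (chain_V xC)).
exact: anc_trans h (chain_anc xC).
Qed.

Lemma anchor_spec v x : v \in tV T -> x \in tV T ->
  [/\ anchor T v x \in chain T v, ancestor T (anchor T v x) x &
      forall c, c \in chain T v -> ancestor T c x -> c <= anchor T v x].
Proof.
move=> vV xV; case: (root_ex inc) => x0 [x0V f0 _].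
have h : x0 \in chain T v :&: [set a | ancestor T a x].
  by rewrite inE chain_root // inE root_anc.
have := maxv_in h; rewrite /anchor inE => /andP[-> ]; rewrite inE => ->; split => // c cC ca.
by apply: maxv_ge; rewrite inE cC inE.
Qed.

Lemma anchor_C v x : v \in tV T -> x \in tV T -> anchor T v x \in chain T v.
Proof. by move=> vV xV; case: (anchor_spec vV xV). Qed.

Lemma anchor_anc v x : v \in tV T -> x \in tV T -> ancestor T (anchor T v x) x.
Proof. by move=> vV xV; case: (anchor_spec vV xV). Qed.

Lemma anchor_max v x c : v \in tV T -> x \in tV T -> c \in chain T v ->
  ancestor T c x -> c <= anchor T v x.
Proof. by move=> vV xV; case: (anchor_spec vV xV) => _ _ h; exact: h. Qed.

Lemma anchor_V v x : v \in tV T -> x \in tV T -> anchor T v x \in tV T.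
Proof. by move=> vV xV; apply: chain_V; exact: anchor_C. Qed.

Lemma anchor_eq v x c : v \in tV T -> x \in tV T -> c \in chain T v -> ancestor T c x ->
  (forall d, d \in chain T v -> ancestor T d x -> d <= c) -> anchor T v x = c.
Proof.
move=> vV xV cC cx h; apply/val_inj/eqP; rewrite eqn_leq anchor_max // andbT.
by apply: h; [exact: anchor_C | exact: anchor_anc].
Qed.

Lemma anchor_chain v x : v \in tV T -> x \in chain T v -> anchor T v x = x.
Proof.
move=> vV xC; apply: anchor_eq => //; first exact: (chain_V xC); first exact: anc_refl.
by move=> d _ /(anc_le inc).
Qed.

Lemma chain_root_par v x : v \in tV T -> x \in tV T -> x \notin chain T v -> tpar T x != x.
Proof. by move=> vV xV xC; apply/eqP => f; move: xC; rewrite chain_root. Qed.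

Lemma anchor_par v x : v \in tV T -> x \in tV T -> x \notin chain T v ->
  anchor T v x = anchor T v (tpar T x).
Proof.
move=> vV xV xC; have nf := chain_root_par vV xV xC.
have pV := par_V inc xV.
apply: anchor_eq => //; first exact: (anchor_C vV pV).
  exact: anc_trans (anchor_anc vV pV) (anc_par _ _).
move=> d dC dx; apply: anchor_max => //; apply: anc_neq dx _.
by apply/eqP => e; move: xC; rewrite -e dC.
Qed.

End InT.
End Chains.


Section Restr.
Variable r : nat.
Notation V := ('I_r.+1).
Implicit Types (S D W : {set V}) (T U : tree r) (x y a b c v : V).

Definition restr T v W : tree r :=
  Tree W [ffun x => if x \in W then (if x \in chain T v then pr (chain T v :&: W) x
                                    else tpar T x) else x].

Lemma minv_ex D w : w \in D -> exists2 x0, x0 \in D & forall y, y \in D -> x0 <= y.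
Proof.
move=> wD; case: (arg_minnP (fun i : V => (i : nat)) wD) => x0 x0D h.
by exists x0.
Qed.

Section R.
Variables (T : tree r) (v : V) (W : {set V}).
Hypothesis inc : is_incr_tree T.
Hypothesis vV : v \in tV T.
Hypothesis WV : W \subset tV T.
Hypothesis HW : forall x, x \in W -> x \notin chain T v -> tpar T x \in W.
Notation R := (restr T v W).

Lemma R_V : tV R = W. Proof. by []. Qed.

Lemma R_par x : tpar R x = if x \in W then (if x \in chain T v then pr (chain T v :&: W) x
                                    else tpar T x) else x.
Proof. by rewrite /= ffunE. Qed.

Lemma R_parC x : x \in chain T v :&: W -> tpar R x = pr (chain T v :&: W) x.
Proof. by rewrite inE => /andP[xC xW]; rewrite R_par xW xC. Qed.

Lemma R_anc x a : x \in W -> ancestor R a x = (a \in W) && ancestor T a x.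
Proof.
elim/ord_ind: x a => x IH a xW.
case: (boolP (x \in chain T v)) => xC.
  have xD : x \in chain T v :&: W by rewrite inE xC xW.
  rewrite (anc_D (@R_parC) xD) (anc_chain inc _ vV xC) inE.
  by case: (a \in W); case: (a \in chain T v).
have xV : x \in tV T by exact: (subsetP WV).
have nf := chain_root_par inc vV xV xC.
have pW := HW xW xC.
rewrite anc_unfold R_par xW (negbTE xC) nf /= IH //; last exact: (par_lt inc nf).
rewrite [ancestor T a x]anc_unfold nf /=.
by case: eqVneq => [->|] //=; rewrite xW.
Qed.

Lemma anchor_W x : x \in W -> anchor T v x \in W.
Proof.
elim/ord_ind: x => x IH xW.
have xV : x \in tV T by exact: (subsetP WV).
case: (boolP (x \in chain T v)) => xC; first by rewrite anchor_chain.
rewrite (anchor_par inc vV xV xC); apply: IH; last exact: HW.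
exact: (par_lt inc (chain_root_par inc vV xV xC)).
Qed.

Lemma R_incr : W != set0 -> is_incr_tree R.
Proof.
case/set0Pn => w wW.
have aD : anchor T v w \in chain T v :&: W.
  by rewrite inE anchor_W // anchor_C //; exact: (subsetP WV).
case: (minv_ex aD) => x0 x0D x0min.
have noless : ~~ [exists c in chain T v :&: W, c < x0].
  by rewrite negb_exists_in; apply/forall_inP => c /x0min; rewrite -leqNgt.
apply/and4P; split.
- by apply/set0Pn; exists w.
- apply/cards1P; exists x0; apply/setP => x; rewrite !inE R_par.
  case: (boolP (x \in W)) => xW /=; last first.
    by apply/esym/negbTE; apply: contraNneq xW => ->; move: x0D; rewrite inE => /andP[].
  case: (boolP (x \in chain T v)) => xC.
    have xD : x \in chain T v :&: W by rewrite inE xC xW.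
    case: (boolP [exists c in chain T v :&: W, c < x]) => ex.
      case: (pr_ex ex) => _ lt _.
      have -> : (pr (chain T v :&: W) x == x) = false by apply/negbTE; rewrite neq_ltn lt.
      apply/esym/negbTE/eqP => e; move: ex; rewrite e; exact/negP.
    rewrite pr_nex // eqxx; apply/esym/eqP/val_inj/eqP; rewrite eqn_leq x0min // andbT.
    by move: ex; rewrite negb_exists_in => /forall_inP/(_ _ x0D); rewrite -leqNgt.
  have xV : x \in tV T by exact: (subsetP WV).
  rewrite (negbTE (chain_root_par inc vV xV xC)); apply/esym/negbTE.
  by apply: contraNneq xC => ->; move: x0D; rewrite inE => /andP[].
- apply/forall_inP => x xW; apply/implyP; rewrite R_par xW.
  case: (boolP (x \in chain T v)) => xC nf.
    case: (boolP [exists c in chain T v :&: W, c < x]) => ex; last by rewrite pr_nex ?eqxx in nf.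
    case: (pr_ex ex) => pD lt _; move: pD; rewrite inE => /andP[_ ->]; exact: lt.
  by rewrite HW // (par_lt inc nf).
- by apply/forall_inP => x; rewrite inE R_par => /negbTE->.
Qed.

Lemma R_chain v' : v' \in W -> chain R v' = W :&: chain T v'.
Proof.
move=> v'W; apply/setP => a; rewrite !inE R_anc //.
case: (boolP (a \in W)) => //= aW; by rewrite (subsetP WV).
Qed.

Lemma R_anchor v' x : v' \in W -> x \in W -> anchor T v' x \in W ->
  anchor R v' x = anchor T v' x.
Proof.
move=> v'W xW aW; have v'V := subsetP WV _ v'W; have xV := subsetP WV _ xW.
have aC := anchor_C inc v'V xV; have aA := anchor_anc inc v'V xV.
move: aC; rewrite chainP => /andP[aV aAv].
rewrite /anchor R_chain //; apply: maxv_sub.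
- apply/subsetP => a; rewrite !inE R_anc //.
  by case/and3P => /and3P[_ -> ->] _ ->.
- by rewrite -/(anchor T v' x) !inE R_anc // aW aA aV aAv.
- by rewrite -/(anchor T v' x) !inE aA aV aAv.
Qed.

Lemma R_pi P : pi_incr P T -> W != set0 ->
  (forall B, B \in P -> (B \subset W) || [disjoint B & W]) -> pi_incr P R.
Proof.
case/and4P=> _ pos _ anc Wn blk; apply/and4P; split.
- exact: R_incr.
- exact: subset_trans WV pos.
- by apply/forall_inP.
- apply/forall_inP => B BP; apply/implyP => BW; apply/forall_inP => i iB.
  apply/forall_inP => j jB; apply/implyP => ij.
  have BV : B \subset tV T := subset_trans BW WV.
  move/forall_inP/(_ B BP): anc; rewrite BV /= => /forall_inP/(_ i iB)/forall_inP/(_ j jB).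
  by move/implyP/(_ ij); rewrite R_anc ?(subsetP BW) //.
Qed.

End R.
End Restr.


Section Graph.
Variable r : nat.
Notation V := ('I_r.+1).
Implicit Types (S D W : {set V}) (T U : tree r) (x y a b c v : V) (B : {set V}).

Definition erel (P : {set {set V}}) T v : rel {set V} :=
  [rel X Y | dep_edge P T v X Y || dep_edge P T v Y X].

Lemma dep_connectedE P T v :
  dep_connected P T v = [forall B in blocks_in P T, forall B' in blocks_in P T,
     connect (erel P T v) B B'].
Proof. by []. Qed.

Lemma erel_sym P T v : connect_sym (erel P T v).
Proof. by apply: sym_connect_sym => X Y; rewrite /erel /= orbC. Qed.

Lemma connect_ind' (K : finType) (e : rel K) (Q : pred K) (u w : K) :
  Q u -> (forall (y z : K), Q y -> e y z -> Q z) -> connect e u w -> Q w.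
Proof.
move=> Qx step /connectP[p pth ->]; elim: p u Qx pth => [|z p IH] u Qx //=.
by case/andP=> exz pth; apply: IH pth; exact: step exz.
Qed.

Lemma connect_hom (K K' : finType) (e : rel K) (e' : rel K') (f : K -> K') (u w : K) :
  (forall (y z : K), e y z -> connect e' (f y) (f z)) -> connect e u w -> connect e' (f u) (f w).
Proof.
move=> h; apply: (connect_ind' (Q := fun z => connect e' (f u) (f z))) => [|y0 z0 c0 e0] /=; first exact: connect0.
exact: connect_trans c0 (h _ _ e0).
Qed.

Lemma tree_ext T U : tV T = tV U -> tpar T =1 tpar U -> T = U.
Proof.
case: T => VT pT; case: U => VU pU /= -> h; congr Tree; exact/ffunP.
Qed.

Section Blocks.
Variables (P : {set {set V}}) (T : tree r).
Hypothesis partP : partition P [set i : V | 0 < i].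
Hypothesis piT : pi_incr P T.

Lemma incT : is_incr_tree T. Proof. by case/and4P: piT. Qed.
Lemma trivP : trivIset P. Proof. by case/and3P: partP. Qed.
Lemma coverP : cover P = [set i : V | 0 < i]. Proof. exact: cover_partition. Qed.
Lemma set0P : set0 \notin P. Proof. by case/and3P: partP. Qed.

Lemma posT x : x \in tV T -> x \in cover P.
Proof. by case/and4P: piT => _ /subsetP h _ _ /h; rewrite coverP. Qed.

Lemma blk_P x : x \in tV T -> pblock P x \in P.
Proof. by move/posT/pblock_mem. Qed.

Lemma blk_mem x : x \in tV T -> x \in pblock P x.
Proof. by move/posT; rewrite -mem_pblock. Qed.

Lemma blk_eq B x : B \in P -> x \in B -> pblock P x = B.
Proof. move=> BP xB; exact: def_pblock trivP BP xB. Qed.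

Lemma sub_or_disj B : B \in P -> (B \subset tV T) || [disjoint B & tV T].
Proof. by case/and4P: piT => _ _ /forall_inP h _ /h. Qed.

Lemma blk_sub_of B x : B \in P -> x \in B -> x \in tV T -> B \subset tV T.
Proof.
move=> BP xB xV; case/orP: (sub_or_disj BP) => // /disjoint_setI0 e.
by move: e; move/setP/(_ x); rewrite !inE xB xV.
Qed.

Lemma blk_V x : x \in tV T -> pblock P x \subset tV T.
Proof. move=> xV; exact: blk_sub_of (blk_P xV) (blk_mem xV) xV. Qed.

Lemma blocks_inP B : (B \in blocks_in P T) = (B \in P) && (B \subset tV T).
Proof. by rewrite inE. Qed.

Lemma blk_in x : x \in tV T -> pblock P x \in blocks_in P T.
Proof. by move=> xV; rewrite blocks_inP blk_P ?blk_V. Qed.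

Lemma blk_ne B : B \in P -> exists x, x \in B.
Proof.
move=> BP; case: (set_0Vmem B) => [e|[x xB]]; last by exists x.
by move: set0P; rewrite -e BP.
Qed.

Lemma blk_anc B i j : B \in P -> B \subset tV T -> i \in B -> j \in B -> i <= j ->
  ancestor T i j.
Proof.
move=> BP BV iB jB; rewrite leq_eqVlt => /orP[/eqP e|lt].
  by rewrite (val_inj e) anc_refl.
case/and4P: piT => _ _ _ /forall_inP/(_ B BP); rewrite BV /=.
by move/forall_inP/(_ i iB)/forall_inP/(_ j jB)/implyP/(_ lt).
Qed.

Lemma maxv_blk B : B \in P -> maxv B \in B.
Proof. by move=> BP; case: (blk_ne BP) => x xB; exact: maxv_in xB. Qed.

Lemma anc_maxv B x : B \in P -> B \subset tV T -> x \in B -> ancestor T x (maxv B).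
Proof. move=> BP BV xB; apply: (blk_anc BP BV xB (maxv_blk BP)); exact: maxv_ge. Qed.

Lemma maxv_V B : B \in blocks_in P T -> maxv B \in tV T.
Proof. by rewrite blocks_inP => /andP[BP BV]; apply: (subsetP BV); exact: maxv_blk. Qed.

Lemma union_blocks W : W \subset tV T ->
  (forall x y, x \in W -> y \in tV T -> pblock P y = pblock P x -> y \in W) ->
  forall B, B \in P -> (B \subset W) || [disjoint B & W].
Proof.
move=> WV h B BP; case/orP: (sub_or_disj BP) => BV.
  case: (boolP [exists x in B, x \in W]) => [/exists_inP[x xB xW]|ne].
    apply/orP; left; apply/subsetP => y yB; apply: (h x) => //; first exact: (subsetP BV).
    by rewrite (blk_eq BP yB) (blk_eq BP xB).
  apply/orP; right; rewrite disjoint_subset; apply/subsetP => y yB; rewrite inE.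
  by apply: contraNN ne => yW; apply/exists_inP; exists y.
apply/orP; right; exact: disjointWr WV BV.
Qed.

Section Edges.
Variable v : V.
Hypothesis vV : v \in tV T.

Lemma edge_blk y : y \in tV T -> y \notin chain T v ->
  dep_edge P T v (pblock P y) (pblock P (anchor T v y)).
Proof.
move=> yV yC; have inc := incT.
have BP := blk_P yV; have BV := blk_V yV; have yB := blk_mem yV.
have ymu := anc_maxv BP BV yB.
have muV : maxv (pblock P y) \in tV T by apply: (subsetP BV); exact: maxv_blk.
have muC : maxv (pblock P y) \notin chain T v.
  by apply: contraNN yC => /(chain_anc_closed inc) h; exact: h ymu.
apply/and4P; split; [exact: blk_in | exact: blk_in (anchor_V inc vV yV) | exact: muC |].
apply/eqP; congr pblock; symmetry; apply: (anchor_eq inc vV muV (anchor_C inc vV yV)).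
  exact: anc_trans (anchor_anc inc vV yV) ymu.
move=> d dC dmu; apply: anchor_max => //.
case/orP: (anc_total inc dmu ymu) => // ydC.
by move: yC; rewrite (chain_anc_closed inc dC ydC).
Qed.

Lemma dep_edgeP B B' : dep_edge P T v B B' ->
  [/\ B \in blocks_in P T, B' \in blocks_in P T, maxv B \notin chain T v &
      B' = pblock P (anchor T v (maxv B))].
Proof. by case/and4P=> h1 h2 h3 /eqP h4. Qed.

Definition nxt B := if maxv B \in chain T v then B else pblock P (anchor T v (maxv B)).

Lemma dep_edge_nxt B B' : dep_edge P T v B B' -> nxt B = B'.
Proof. by case/dep_edgeP=> _ _ h ->; rewrite /nxt (negbTE h). Qed.

Lemma nxt_in B : B \in blocks_in P T -> nxt B \in blocks_in P T.
Proof.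
move=> Bin; rewrite /nxt; case: ifP => // _; apply: blk_in.
exact: (anchor_V incT vV (maxv_V Bin)).
Qed.

Lemma key_step B : B \in blocks_in P T -> nxt B != B -> nxt (nxt B) != nxt B ->
  anchor T v (maxv B) < anchor T v (maxv (nxt B)).
Proof.
move=> Bin n1 n2; have inc := incT.
have muC : maxv B \notin chain T v by move: n1; rewrite /nxt; case: ifP; rewrite ?eqxx.
move: n1 n2; rewrite /nxt (negbTE muC) => n1.
set a := anchor T v (maxv B); set B' := pblock P a.
have aV : a \in tV T := anchor_V inc vV (maxv_V Bin).
have aC : a \in chain T v := anchor_C inc vV (maxv_V Bin).
have B'P := blk_P aV; have B'V := blk_V aV; have aB' := blk_mem aV.
have amu := anc_maxv B'P B'V aB'.
have mu'V : maxv B' \in tV T by apply: (subsetP B'V); exact: maxv_blk.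
have le := anchor_max inc vV mu'V aC amu.
case: ifP => [_|mu'C]; first by rewrite eqxx.
rewrite ltn_neqAle le andbT; apply: contraNneq => e.
by rewrite -(val_inj e).
Qed.

Lemma iter_in k B : B \in blocks_in P T -> iter k nxt B \in blocks_in P T.
Proof. by move=> Bin; elim: k => //= k IH; exact: nxt_in. Qed.

Lemma iter_key k B : B \in blocks_in P T -> nxt (iter k nxt B) != iter k nxt B ->
  k <= anchor T v (maxv (iter k nxt B)).
Proof.
move=> Bin; elim: k => // k IH /= nf.
have nf' : nxt (iter k nxt B) != iter k nxt B.
  by apply: contraNneq nf => e; rewrite e e.
have := key_step (iter_in k Bin) nf' nf; have := IH nf'; lia.
Qed.

Definition sinkf B := iter r.+1 nxt B.

Lemma sinkf_fix B : B \in blocks_in P T -> nxt (sinkf B) = sinkf B.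
Proof.
move=> Bin; apply/eqP; apply: contraT => nf.
have := iter_key Bin nf; have := ltn_ord (anchor T v (maxv (iter r.+1 nxt B))); lia.
Qed.

Lemma sinkf_nxt B : B \in blocks_in P T -> sinkf (nxt B) = sinkf B.
Proof. by move=> Bin; rewrite /sinkf -iterSr iterS sinkf_fix. Qed.

Lemma connect_sinkf B1 B2 : connect (erel P T v) B1 B2 -> B2 = B1 \/ sinkf B1 = sinkf B2.
Proof.
move=> c; case: (eqVneq B2 B1) => [->|ne]; [by left | right].
move/connectP: c ne => [p pth ->]; elim: p B1 pth => [|z p IH] B1 /=; first by rewrite eqxx.
case/andP=> ez pth ne.
have ezs : sinkf B1 = sinkf z.
  case/orP: ez => /[dup] /dep_edge_nxt <- /dep_edgeP[h1 h2 _ _]; rewrite sinkf_nxt //.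
case: (eqVneq (last z p) z) => [e|ne2]; first by rewrite e.
by rewrite ezs; exact: IH.
Qed.

Lemma sink_sep S1 S2 : S1 \in blocks_in P T -> nxt S1 = S1 -> nxt S2 = S2 -> S1 != S2 ->
  ~~ connect (erel P T v) S1 S2.
Proof.
move=> S1in f1 f2 ne; apply/negP => /connect_sinkf [e|]; first by move: ne; rewrite e eqxx.
by rewrite /sinkf !iter_fix //; exact/eqP.
Qed.

End Edges.
End Blocks.
End Graph.


Section Comp.
Variable r : nat.
Notation V := ('I_r.+1).
Implicit Types (S D W : {set V}) (U : tree r) (x y a b c : V) (B : {set V}).

Variables (P : {set {set V}}) (T : tree r) (v : V).
Hypothesis partP : partition P [set i : V | 0 < i].
Hypothesis piT : pi_incr P T.
Hypothesis vV : v \in tV T.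

Definition Xc := [set B | connect (erel P T v) (pblock P v) B].
Definition V1c := [set x in tV T | pblock P x \in Xc].
Definition V2c := [set x in tV T | pblock P x \notin Xc].

Let inc := incT piT.

Lemma V1P x : (x \in V1c) = (x \in tV T) && (pblock P x \in Xc).
Proof. by rewrite /V1c inE. Qed.
Lemma V2P x : (x \in V2c) = (x \in tV T) && (pblock P x \notin Xc).
Proof. by rewrite /V2c inE. Qed.

Lemma X_closed B B' : erel P T v B B' -> (B \in Xc) = (B' \in Xc).
Proof.
move=> e; rewrite !inE; apply/idP/idP => h.
  by apply: connect_trans h (connect1 e).
apply: connect_trans h _; rewrite erel_sym; exact: connect1.
Qed.

Lemma X_v : pblock P v \in Xc.
Proof. by rewrite inE connect0. Qed.

Lemma X_in B : B \in Xc -> B \in blocks_in P T.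
Proof.
rewrite inE; apply: connect_ind' => [|y z _]; first exact: blk_in.
by case/orP => /dep_edgeP[].
Qed.

Lemma X_sub B : B \in Xc -> B \subset V1c.
Proof.
move=> BX; have := X_in BX; rewrite blocks_inP => /andP[BP BV].
apply/subsetP => x xB; rewrite V1P (subsetP BV) //= (blk_eq partP BP xB) //.
Qed.

Lemma anchor_side x : x \in tV T -> (pblock P (anchor T v x) \in Xc) = (pblock P x \in Xc).
Proof.
move=> xV; case: (boolP (x \in chain T v)) => xC; first by rewrite anchor_chain.
apply/esym/X_closed; rewrite /erel /=; by rewrite (edge_blk partP piT vV xV xC).
Qed.

Lemma par_side x : x \in tV T -> x \notin chain T v ->
  (pblock P (tpar T x) \in Xc) = (pblock P x \in Xc).
Proof.
move=> xV xC; have pV := par_V inc xV.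
by rewrite -(anchor_side pV) -(anchor_par inc vV xV xC) anchor_side.
Qed.

Lemma H1c x : x \in V1c -> x \notin chain T v -> tpar T x \in V1c.
Proof.
rewrite ?V1P ?V2P => /andP[xV xX] xC; rewrite ?V1P ?V2P par_V //= par_side //.
Qed.

Lemma H2c x : x \in V2c -> x \notin chain T v -> tpar T x \in V2c.
Proof.
rewrite ?V1P ?V2P => /andP[xV xX] xC; rewrite ?V1P ?V2P par_V //= par_side //.
Qed.

Lemma V1sub : V1c \subset tV T. Proof. by apply/subsetP => x; rewrite V1P => /andP[]. Qed.
Lemma V2sub : V2c \subset tV T. Proof. by apply/subsetP => x; rewrite V2P => /andP[]. Qed.

Lemma V12 : V1c :|: V2c = tV T.
Proof. by apply/setP => x; rewrite inE V1P V2P; case: (x \in tV T); case: (pblock P x \in Xc). Qed.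

Lemma V12disj : [disjoint V1c & V2c].
Proof.
rewrite disjoint_subset; apply/subsetP => x; rewrite V1P => /andP[_ xX].
by apply/negP; rewrite V2P xX andbF.
Qed.

Lemma v_V1 : v \in V1c. Proof. by rewrite V1P vV X_v. Qed.

Lemma V1blocks : forall B, B \in P -> (B \subset V1c) || [disjoint B & V1c].
Proof.
apply: (union_blocks partP piT V1sub) => x y; rewrite !V1P => /andP[_ h] -> e.
by rewrite e h.
Qed.

Lemma V2blocks : forall B, B \in P -> (B \subset V2c) || [disjoint B & V2c].
Proof.
apply: (union_blocks partP piT V2sub) => x y; rewrite !V2P => /andP[_ h] -> e.
by rewrite e h.
Qed.

Lemma V1n0 : V1c != set0. Proof. by apply/set0Pn; exists v; exact: v_V1. Qed.

Section Exist.
Hypothesis V2n0 : V2c != set0.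

Definition tc := maxv (chain T v :&: V2c).

Lemma tc_spec : tc \in chain T v /\ tc \in V2c.
Proof.
case/set0Pn: V2n0 => w wV2.
have h : anchor T v w \in chain T v :&: V2c.
  rewrite inE (anchor_W inc vV V2sub H2c wV2) andbT.
  exact: (anchor_C inc vV (subsetP V2sub _ wV2)).
by have := maxv_in h; rewrite inE => /andP[].
Qed.

Lemma tc_lt : tc < v.
Proof.
case: tc_spec => tC tV2; rewrite ltn_neqAle (chain_le inc tC) andbT.
apply/eqP => /val_inj e; move: V12disj; rewrite disjoint_subset => /subsetP/(_ v v_V1).
by rewrite inE -e tV2.
Qed.

Lemma exist_pi1 : pi_incr P (restr T v V1c).
Proof. exact: (R_pi inc vV V1sub H1c piT V1n0 V1blocks). Qed.

Lemma exist_pi2 : pi_incr P (restr T v V2c).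
Proof. exact: (R_pi inc vV V2sub H2c piT V2n0 V2blocks). Qed.

Lemma exist_spl : T = spl (restr T v V1c) v (restr T v V2c) tc.
Proof.
case: tc_spec => tC tV2.
have eC : chain (restr T v V1c) v :|: chain (restr T v V2c) tc = chain T v.
  rewrite (R_chain inc vV V1sub H1c v_V1) (R_chain inc vV V2sub H2c tV2).
  apply/setP => a; rewrite in_setU !in_setI (chainP _ tc) (anc_chain inc _ vV tC).
  case: (boolP (a \in chain T v)) => aC; last by rewrite !andbF.
  have aV : a \in tV T := chain_V aC.
  rewrite aV /=.
  case: (boolP (a \in V1c)) => //= aV1.
  have aV2 : a \in V2c by move: aV; rewrite -V12 in_setU (negbTE aV1).
  by rewrite aV2 /=; apply: maxv_ge; rewrite in_setI aC.
apply: tree_ext; first by rewrite /= V12.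
move=> x; rewrite /spl /= ffunE eC.
case: (boolP (x \in chain T v)) => xC; first by rewrite (chain_par inc vV xC).
rewrite !R_par.
case: (boolP (x \in V1c)) => xV1; first by rewrite (negbTE xC).
case: (boolP (x \in V2c)) => xV2; first by rewrite (negbTE xC).
rewrite par_out //; by rewrite -V12 inE negb_or xV1.
Qed.

Lemma edge_T_T1 B B' : B \in Xc -> B' \in Xc -> dep_edge P T v B B' ->
  dep_edge P (restr T v V1c) v B B'.
Proof.
move=> BX B'X /dep_edgeP [Bin B'in muC e].
have muV1 : maxv B \in V1c.
  apply: (subsetP (X_sub BX)); apply: (maxv_blk partP); move: Bin; rewrite blocks_inP => /andP[] //.
apply/and4P; split.
- move: Bin; rewrite !inE => /andP[-> _] /=; exact: X_sub.
- move: B'in; rewrite !inE => /andP[-> _] /=; exact: X_sub.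
- by rewrite (R_chain inc vV V1sub H1c v_V1) inE negb_and muC orbT.
- rewrite (R_anchor inc vV V1sub H1c v_V1 muV1) ?e //.
  apply: anchor_W => //; [exact: V1sub | exact: H1c].
Qed.

Lemma exist_conn : dep_connected P (restr T v V1c) v.
Proof.
rewrite dep_connectedE; apply/forall_inP => B1 B1in; apply/forall_inP => B2 B2in.
have inX : forall B, B \in blocks_in P (restr T v V1c) -> B \in Xc.
  move=> B; rewrite inE => /andP[BP BV1]; case: (blk_ne partP BP) => x xB.
  by move: (subsetP BV1 x xB); rewrite inE (blk_eq partP BP xB) => /andP[].
have c12 : connect (erel P T v) B1 B2.
  have := inX _ B1in; have := inX _ B2in; rewrite !inE => h2 h1.
  by apply: connect_trans h2; rewrite erel_sym.
set f := fun B => if B \in Xc then B else pblock P v.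
have := connect_hom (f := f) (e' := erel P (restr T v V1c) v) _ c12.
rewrite /f (inX _ B1in) (inX _ B2in); apply => y z e.
rewrite -(X_closed e); case: ifP => yX; last exact: connect0.
have zX : z \in Xc by rewrite -(X_closed e).
apply: connect1; rewrite /erel /=.
by case/orP: e => h; [rewrite (edge_T_T1 yX zX h) | rewrite (edge_T_T1 zX yX h) orbT].
Qed.

End Exist.

Section Uniq.
Variables (T1 T2 : tree r) (t : V).
Hypotheses (pi1 : pi_incr P T1) (pi2 : pi_incr P T2) (v1 : v \in tV T1) (t2 : t \in tV T2)
  (disj : [disjoint tV T1 & tV T2]) (tv : t < v) (conn1 : dep_connected P T1 v)
  (eT : T = spl T1 v T2 t).

Let inc1 := incT pi1.
Let inc2 := incT pi2.
Let Cs := chain T1 v :|: chain T2 t.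

Lemma u_tV : tV T = tV T1 :|: tV T2. Proof. by rewrite eT. Qed.

Lemma u_par x : tpar T x = if x \in Cs then pr Cs x else if x \in tV T1 then tpar T1 x
   else if x \in tV T2 then tpar T2 x else x.
Proof. by rewrite eT /spl /= ffunE. Qed.

Lemma u_notboth x : x \in tV T1 -> x \in tV T2 -> False.
Proof. by move=> h1 h2; move: disj; rewrite disjoint_subset => /subsetP/(_ x h1); rewrite inE h2. Qed.

Lemma u_Cle a : a \in Cs -> a <= v.
Proof.
rewrite in_setU => /orP[h|h]; first exact: (chain_le inc1 h).
exact: leq_trans (chain_le inc2 h) (ltnW tv).
Qed.

Lemma u_CV a : a \in Cs -> a \in tV T.
Proof.
rewrite u_tV !in_setU => /orP[h|h]; first by rewrite (chain_V h).
by rewrite (chain_V h) orbT.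
Qed.

Lemma u_chain : chain T v = Cs.
Proof.
have vC : v \in Cs by rewrite in_setU chain_self.
apply/setP => a; rewrite chainP (anc_D (D := Cs) _ vC).
  by case: (boolP (a \in Cs)) => aC; rewrite ?andbF // u_CV // u_Cle.
by move=> x xC; rewrite u_par xC.
Qed.

Lemma u_C1 x : x \in tV T1 -> (x \in Cs) = (x \in chain T1 v).
Proof.
move=> x1; rewrite in_setU; case: (boolP (x \in chain T2 t)) => //= h; rewrite ?orbF //.
by case: (u_notboth x1 (chain_V h)).
Qed.

Lemma u_C2 x : x \in tV T2 -> (x \in Cs) = (x \in chain T2 t).
Proof.
move=> x2; rewrite in_setU; case: (boolP (x \in chain T1 v)) => //= h.
by case: (u_notboth (chain_V h) x2).
Qed.

Lemma u_H1 x : x \in tV T1 -> x \notin chain T v -> tpar T x \in tV T1.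
Proof.
move=> x1; rewrite u_chain => xC; rewrite u_par (negbTE xC) x1.
have nr : tpar T1 x != x.
  apply/eqP => f; move: xC; rewrite u_C1 // chain_root //.
by case/andP: (par_in inc1 x1 nr).
Qed.

Lemma u_H2 x : x \in tV T2 -> x \notin chain T v -> tpar T x \in tV T2.
Proof.
move=> x2; rewrite u_chain => xC; rewrite u_par (negbTE xC).
have -> : (x \in tV T1) = false by apply/negP => x1; exact: u_notboth x1 x2.
rewrite x2; have nr : tpar T2 x != x.
  apply/eqP => f; move: xC; rewrite u_C2 // chain_root //.
by case/andP: (par_in inc2 x2 nr).
Qed.

Lemma u_sub1 : tV T1 \subset tV T. Proof. by rewrite u_tV subsetUl. Qed.
Lemma u_sub2 : tV T2 \subset tV T. Proof. by rewrite u_tV subsetUr. Qed.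

Lemma u_R1 : T1 = restr T v (tV T1).
Proof.
apply: tree_ext => // x; rewrite R_par.
case: (boolP (x \in tV T1)) => x1; last by rewrite par_out.
case: (boolP (x \in chain T v)) => xC.
  have e : chain T v :&: tV T1 = chain T1 v.
    apply/setP => a; rewrite inE u_chain; case: (boolP (a \in tV T1)) => a1.
      by rewrite andbT u_C1.
    by rewrite andbF; apply/esym/negP => /chain_V; rewrite (negbTE a1).
  rewrite e; apply: chain_par => //; by rewrite -u_C1 // -u_chain.
by rewrite u_par -u_chain (negbTE xC) x1.
Qed.

Lemma u_R2 : T2 = restr T v (tV T2).
Proof.
apply: tree_ext => // x; rewrite R_par.
case: (boolP (x \in tV T2)) => x2; last by rewrite par_out.
have n1 : (x \in tV T1) = false by apply/negP => x1; exact: u_notboth x1 x2.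
case: (boolP (x \in chain T v)) => xC.
  have e : chain T v :&: tV T2 = chain T2 t.
    apply/setP => a; rewrite inE u_chain; case: (boolP (a \in tV T2)) => a2.
      by rewrite andbT u_C2.
    by rewrite andbF; apply/esym/negP => /chain_V; rewrite (negbTE a2).
  rewrite e; apply: chain_par => //; by rewrite -u_C2 // -u_chain.
by rewrite u_par -u_chain (negbTE xC) n1 x2.
Qed.

Lemma u_chain1 v' : v' \in tV T1 -> chain T1 v' = tV T1 :&: chain T v'.
Proof. move=> h; rewrite {1}u_R1; exact: (R_chain inc vV u_sub1 u_H1). Qed.

Lemma u_anchor1 x : x \in tV T1 -> anchor T1 v x = anchor T v x.
Proof.
move=> x1; rewrite {1}u_R1; apply: (R_anchor inc vV u_sub1 u_H1) => //.
exact: (anchor_W inc vV u_sub1 u_H1).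
Qed.

Lemma u_V1 : tV T1 = V1c.
Proof.
apply/setP => x; rewrite V1P; apply/idP/idP.
  move=> x1; rewrite (subsetP u_sub1) //= /Xc inE.
  have xV : x \in tV T := subsetP u_sub1 _ x1.
  have bin : forall y, y \in tV T1 -> pblock P y \in blocks_in P T1.
    move=> y y1; have yV := subsetP u_sub1 _ y1.
    by rewrite inE (blk_P partP piT yV) (blk_sub_of pi1 (blk_P partP piT yV) (blk_mem partP piT yV) y1).
  move: conn1; rewrite dep_connectedE => /forall_inP/(_ _ (bin _ v1))/forall_inP/(_ _ (bin _ x1)).
  apply: connect_sub => y z e; apply: connect1.
  have tr : forall B B', dep_edge P T1 v B B' -> dep_edge P T v B B'.
    move=> B B' /and4P[Bin B'in muC /eqP eB'].
    move: Bin B'in; rewrite !inE => /andP[BP B1] /andP[B'P B'1].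
    have mu1 : maxv B \in tV T1 by apply: (subsetP B1); exact: (maxv_blk partP BP).
    apply/and4P; split.
    - by rewrite inE BP (subset_trans B1 u_sub1).
    - by rewrite inE B'P (subset_trans B'1 u_sub1).
    - by move: muC; rewrite u_chain1 // in_setI mu1.
    - by rewrite eB' u_anchor1.
  by case/orP: e => h; rewrite /erel /=; [rewrite (tr _ _ h) | rewrite (tr _ _ h) orbT].
case/andP=> xV; rewrite /Xc inE => xX.
have Q : pblock P x \subset tV T1.
  move: xX; apply: (connect_ind' (Q := fun B => B \subset tV T1)).
    exact: (blk_sub_of pi1 (blk_P partP piT vV) (blk_mem partP piT vV) v1).
  move=> y z yQ /orP[]; first move=> /dep_edgeP [yin zin muC ez].
    move: yin; rewrite blocks_inP => /andP[yP _].
    have mu1 : maxv y \in tV T1 by apply: (subsetP yQ); exact: (maxv_blk partP yP).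
    have a1 := anchor_W inc vV u_sub1 u_H1 mu1.
    by rewrite ez; exact: (blk_sub_of pi1 (blk_P partP piT (subsetP u_sub1 _ a1)) (blk_mem partP piT (subsetP u_sub1 _ a1)) a1).
  move=> /dep_edgeP [zin yin muC ez].
  move: zin; rewrite blocks_inP => /andP[zP zV].
  have muz : maxv z \in z := maxv_blk partP zP.
  case: (boolP (maxv z \in tV T1)) => mu1; first exact: (blk_sub_of pi1 zP muz mu1).
  have mu2 : maxv z \in tV T2.
    by move: (subsetP zV _ muz); rewrite u_tV inE (negbTE mu1).
  have a2 := anchor_W inc vV u_sub2 u_H2 mu2.
  have aV := subsetP u_sub2 _ a2.
  have : anchor T v (maxv z) \in y by rewrite ez; exact: (blk_mem partP piT aV).
  by move/(subsetP yQ) => a1; case: (u_notboth a1 a2).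
by apply: (subsetP Q); exact: (blk_mem partP piT xV).
Qed.

Lemma u_V2 : tV T2 = V2c.
Proof.
apply/setP => x; rewrite V2P; apply/idP/idP.
  move=> x2; rewrite (subsetP u_sub2) //=.
  have : x \notin tV T1 by apply/negP => x1; exact: u_notboth x1 x2.
  by rewrite u_V1 V1P (subsetP u_sub2) //.
case/andP=> xV xX; move: xV; rewrite u_tV in_setU => /orP[x1|//].
by move: x1; rewrite u_V1 V1P (negbTE xX) andbF.
Qed.

Lemma u_t : t = maxv (chain T v :&: V2c).
Proof.
rewrite -u_V2; symmetry; apply: maxv_eq.
  by rewrite in_setI t2 u_chain u_C2 // chain_self.
move=> y; rewrite in_setI => /andP[yC y2]; move: yC; rewrite u_chain u_C2 //.
move=> h; exact: (chain_le inc2 h).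
Qed.

End Uniq.
End Comp.


Section PartB.
Variable r : nat.
Notation V := ('I_r.+1).
Implicit Types (S D W : {set V}) (U : tree r) (x y a b d : V) (B : {set V}).

Variables (P : {set {set V}}) (T : tree r) (M m : V).
Hypothesis partP : partition P [set i : V | 0 < i].
Hypothesis piT : pi_incr P T.
Hypotheses (MV : M \in tV T) (Mmax : forall x, x \in tV T -> x <= M).
Hypotheses (mV : m \in tV T) (mM : m \notin pblock P M)
  (mmax : forall x, x \in tV T -> x \notin pblock P M -> x <= m).
Hypothesis irr : dep_connected P T M.

Let inc := incT piT.

Lemma MB : maxv (pblock P M) = M.
Proof.
apply: maxv_eq; first exact: (blk_mem partP piT MV).
move=> y yB; apply: Mmax; exact: (subsetP (blk_V partP piT MV)).
Qed.

Lemma mB : maxv (pblock P m) = m.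
Proof.
apply: maxv_eq; first exact: (blk_mem partP piT mV).
move=> y yB; have yV := subsetP (blk_V partP piT mV) _ yB; apply: mmax => //.
apply/negP => yM; move: mM.
have e1 := blk_eq partP (blk_P partP piT MV) yM.
have e2 := blk_eq partP (blk_P partP piT mV) yB.
by rewrite -e1 e2 (blk_mem partP piT mV).
Qed.

Lemma m_lt_M : m < M.
Proof.
rewrite ltn_neqAle Mmax // andbT; apply/eqP => /val_inj e.
by move: mM; rewrite e (blk_mem partP piT MV).
Qed.

Lemma nonsink B : B \in blocks_in P T -> B != pblock P M -> nxt P T M B != B.
Proof.
move=> Bin ne; apply/eqP => f.
have f1 : nxt P T M (pblock P M) = pblock P M.
  by rewrite /nxt MB (chain_self MV).
have := sink_sep partP piT MV (blk_in partP piT MV) f1 f; rewrite eq_sym => /(_ ne).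
move: irr; rewrite dep_connectedE => /forall_inP/(_ _ (blk_in partP piT MV))/forall_inP/(_ _ Bin).
by move=> ->.
Qed.

Lemma nonsink' B : B \in blocks_in P T -> B != pblock P M ->
  maxv B \notin chain T M /\ pblock P (anchor T M (maxv B)) != B.
Proof.
move=> Bin ne; have := nonsink Bin ne; rewrite /nxt.
by case: ifP => //; rewrite eqxx.
Qed.

Definition cc := anchor T m M.

Lemma cc_m : cc \in chain T m. Proof. exact: anchor_C. Qed.
Lemma cc_V : cc \in tV T. Proof. exact: (chain_V cc_m). Qed.
Lemma cc_M : cc \in chain T M. Proof. by rewrite chainP cc_V anchor_anc. Qed.
Lemma cc_max d : d \in chain T m -> d \in chain T M -> d <= cc.
Proof. move=> dm dM; apply: anchor_max => //; exact: chain_anc dM. Qed.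
Lemma cc_le_m : cc <= m. Proof. exact: (chain_le inc cc_m). Qed.

Lemma Qlem y a : y \in tV T -> a \in chain T M -> cc < a -> ancestor T a y ->
  y \notin chain T m /\ anchor T m y = cc.
Proof.
move=> yV aM lt ay.
have ca : ancestor T cc a := chain_total inc cc_M aM (ltnW lt).
have key : forall d, d \in chain T m -> ancestor T d y -> d <= cc.
  move=> d dm dy; case/orP: (anc_total inc dy ay) => h.
    exact: (cc_max dm (chain_anc_closed inc aM h)).
  have am : a \in chain T m := chain_anc_closed inc dm h.
  by move: (cc_max am aM); rewrite leqNgt lt.
split.
  apply/negP => ym; have := key _ ym (anc_refl _ _).
  by have := anc_le inc ay; lia.
apply: anchor_eq => //; [exact: (cc_m )| exact: (anc_trans ca ay)].
Qed.

Lemma Qlem' y : y \in tV T -> y \notin chain T M -> anchor T M y < cc ->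
  y \notin chain T m /\ anchor T m y = anchor T M y.
Proof.
move=> yV yM lt; move Ea: (anchor T M y) lt => a lt.
have aM : a \in chain T M by rewrite -Ea; exact: (anchor_C inc MV yV).
have ay : ancestor T a y by rewrite -Ea; exact: (anchor_anc inc MV yV).
have ncy : ~~ ancestor T cc y.
  apply/negP => h; have := anchor_max inc MV yV cc_M h; rewrite Ea; lia.
have am : a \in chain T m.
  exact: (chain_anc_closed inc cc_m (chain_total inc aM cc_M (ltnW lt))).
split.
  apply/negP => ym; case: (leqP y cc) => h.
    by move: yM; rewrite (chain_anc_closed inc cc_M (chain_total inc ym cc_m h)).
  by move: ncy; rewrite (chain_total inc cc_m ym (ltnW h)).
apply: anchor_eq => // d dm dy; case: (leqP d cc) => h.
  rewrite -Ea; apply: (anchor_max inc MV yV) => //; exact: (chain_anc_closed inc cc_M (chain_total inc dm cc_m h)).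
by move: ncy; rewrite (anc_trans (chain_total inc cc_m dm (ltnW h)) dy).
Qed.

Lemma anchor_sym : anchor T M m = cc.
Proof.
rewrite /cc /anchor; apply: maxv_ext => a; rewrite !in_setI !inE.
by case: (a \in tV T); case: (ancestor T a M); case: (ancestor T a m).
Qed.

Lemma cc_not_m : cc \notin pblock P m.
Proof.
have min := blk_in partP piT mV.
have ne : pblock P m != pblock P M.
  apply/eqP => e; move: mM; rewrite -e; by rewrite (blk_mem partP piT mV).
case: (nonsink' min ne) => _; rewrite mB anchor_sym.
apply: contraNN => cm; apply/eqP; exact: (blk_eq partP (blk_P partP piT mV) cm).
Qed.

Lemma sink_c : nxt P T m (pblock P cc) = pblock P cc.
Proof.
have cin := blk_in partP piT cc_V.
case: (eqVneq (pblock P cc) (pblock P M)) => [e|ne].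
  rewrite /nxt e MB.
  have MnC : M \notin chain T m by apply/negP => /(chain_le inc); have := m_lt_M; lia.
  by rewrite (negbTE MnC) -/cc.
case: (nonsink' cin ne) => muM; set mu := maxv (pblock P cc) => nb.
have cP := blk_P partP piT cc_V.
have muV : mu \in tV T := maxv_V partP cin.
have cmu : ancestor T cc mu := anc_maxv partP piT cP (blk_V partP piT cc_V) (blk_mem partP piT cc_V).
have le := anchor_max inc MV muV cc_M cmu.
have ne2 : anchor T M mu != cc by apply: contraNneq nb => ->.
have lt : cc < anchor T M mu by rewrite ltn_neqAle le andbT eq_sym; apply/eqP => /val_inj /eqP; rewrite (negbTE ne2).
case: (Qlem muV (anchor_C inc MV muV) lt (anchor_anc inc MV muV)) => muC e.
by rewrite /nxt (negbTE muC) e.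
Qed.

Lemma sink_m : nxt P T m (pblock P m) = pblock P m.
Proof. by rewrite /nxt mB chain_self. Qed.

Notation X := (Xc P T m).

Lemma cc_notX : pblock P cc \notin X.
Proof.
rewrite /Xc inE; apply: (sink_sep partP piT mV (blk_in partP piT mV) sink_m sink_c).
apply/eqP => e; move: cc_not_m; rewrite e; by rewrite (blk_mem partP piT cc_V).
Qed.

Lemma M_notX : pblock P M \notin X.
Proof.
have MnC : M \notin chain T m by apply/negP => /(chain_le inc); have := m_lt_M; lia.
have lt : cc < M by have := cc_le_m; have := m_lt_M; lia.
case: (Qlem MV (chain_self MV) lt (anc_refl _ _)) => _ e.
have := edge_blk partP piT mV MV MnC; rewrite e => ed.
by rewrite (@X_closed _ _ _ _ _ (pblock P cc)) ?cc_notX //= /erel /= ed.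
Qed.

Lemma blk_of_maxv B : B \in blocks_in P T -> pblock P (maxv B) = B.
Proof.
rewrite blocks_inP => /andP[BP _]; exact: (blk_eq partP BP (maxv_blk partP BP)).
Qed.

Lemma transfer B : B \in blocks_in P T -> maxv B \notin chain T M ->
  (B \notin X -> pblock P (anchor T M (maxv B)) \notin X) /\
  (B \in X -> pblock P (anchor T M (maxv B)) \notin X -> pblock P (anchor T M (maxv B)) = pblock P cc).
Proof.
move=> Bin muM; set mu := maxv B; set a := anchor T M mu.
have muV : mu \in tV T := maxv_V partP Bin.
have aM : a \in chain T M := anchor_C inc MV muV.
have aV : a \in tV T := chain_V aM.
case: (ltngtP a cc) => h.
- case: (Qlem' muV muM h) => muC e.
  have ed := edge_blk partP piT mV muV muC; rewrite e blk_of_maxv // in ed.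
  have cl : (B \in X) = (pblock P a \in X) by apply: X_closed; rewrite /erel /= ed.
  by rewrite cl; split => // ->.
- case: (Qlem muV aM h (anchor_anc inc MV muV)) => muC e.
  have ed := edge_blk partP piT mV muV muC; rewrite e blk_of_maxv // in ed.
  have cl : (B \in X) = (pblock P cc \in X) by apply: X_closed; rewrite /erel /= ed.
  rewrite cl (negbTE cc_notX); split => // _.
  have Din := blk_in partP piT aV.
  have DP := blk_P partP piT aV.
  have amu : ancestor T a (maxv (pblock P a)) :=
    anc_maxv partP piT DP (blk_V partP piT aV) (blk_mem partP piT aV).
  have mu'V := maxv_V partP Din.
  case: (Qlem mu'V aM h amu) => mu'C e'.
  have ed' := edge_blk partP piT mV mu'V mu'C; rewrite e' blk_of_maxv // in ed'.
  have cl' : (pblock P a \in X) = (pblock P cc \in X) by apply: X_closed; rewrite /erel /= ed'.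
  by rewrite cl' cc_notX.
- have ->: a = cc by apply/val_inj.
  by split => // _; exact: cc_notX.
Qed.

Lemma V2M : M \in V2c P T m.
Proof. by rewrite V2P MV M_notX. Qed.

Lemma T2_conn : dep_connected P (restr T m (V2c P T m)) M.
Proof.
set T2 := restr T m (V2c P T m).
have H2 := H2c partP piT mV.
have sub2 := V2sub P T m.
have notX_sub : forall B, B \in blocks_in P T -> B \notin X -> B \subset V2c P T m.
  move=> B; rewrite blocks_inP => /andP[BP BV] BX; apply/subsetP => x xB.
  by rewrite V2P (subsetP BV) // (blk_eq partP BP xB).
have inT2 : forall B, B \in blocks_in P T2 -> B \in blocks_in P T /\ B \notin X.
  move=> B; rewrite inE => /andP[BP B2]; split.
    by rewrite blocks_inP BP (subset_trans B2 sub2).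
  case: (blk_ne partP BP) => x xB; move: (subsetP B2 _ xB).
  by rewrite V2P (blk_eq partP BP xB) => /andP[].
set f := fun B => if B \in X then pblock P cc else B.
have hom1 : forall (Y Z : {set V}), dep_edge P T M Y Z -> connect (erel P T2 M) (f Y) (f Z).
  move=> y z ed; have := ed; move=> /dep_edgeP [yin zin muC ez].
  have [tr1 tr2] := transfer yin muC.
  rewrite /f; case: (boolP (y \in X)) => yX.
    case: (boolP (z \in X)) => zX; first exact: connect0.
    by rewrite ez (tr2 yX) -?ez //; exact: connect0.
  have zX : z \notin X by rewrite ez; exact: tr1.
  rewrite (negbTE zX); apply: connect1; rewrite /erel /=; apply/orP; left.
  have y2 := notX_sub _ yin yX; have z2 := notX_sub _ zin zX.
  move: yin zin; rewrite !blocks_inP => /andP[yP _] /andP[zP _].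
  have mu2 : maxv y \in V2c P T m := subsetP y2 _ (maxv_blk partP yP).
  have aV2 : anchor T M (maxv y) \in V2c P T m.
    rewrite V2P (anchor_V inc MV (subsetP sub2 _ mu2)) -ez //.
  apply/and4P; split.
  - by rewrite inE yP y2.
  - by rewrite inE zP z2.
  - by rewrite (R_chain inc mV sub2 H2 V2M) in_setI negb_and muC orbT.
  - by rewrite (R_anchor inc mV sub2 H2 V2M mu2 aV2) ez.
rewrite dep_connectedE; apply/forall_inP => B1 B1in; apply/forall_inP => B2 B2in.
case: (inT2 _ B1in) => B1T B1X; case: (inT2 _ B2in) => B2T B2X.
have c : connect (erel P T M) B1 B2.
  by move: irr; rewrite dep_connectedE => /forall_inP/(_ _ B1T)/forall_inP/(_ _ B2T).
have := connect_hom (f := f) (e' := erel P T2 M) _ c.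
rewrite /f (negbTE B1X) (negbTE B2X); apply => Y Z /orP[] ed; first exact: hom1.
by rewrite erel_sym; exact: hom1.
Qed.

End PartB.


Lemma uniq_all r (P : {set {set 'I_r.+1}}) (T : tree r) (v : 'I_r.+1)
  (partP : partition P [set i : 'I_r.+1 | 0 < i]) (piT : pi_incr P T) (vV : v \in tV T)
  (T1 T2 : tree r) (t : 'I_r.+1) :
  pi_incr P T1 -> pi_incr P T2 -> v \in tV T1 -> t \in tV T2 -> [disjoint tV T1 & tV T2] ->
  t < v -> dep_connected P T1 v -> T = spl T1 v T2 t ->
  (T1, T2, t) = (restr T v (V1c P T v), restr T v (V2c P T v), tc P T v).
Proof.
move=> pi1 pi2 v1 t2 dj lt c1 eT.
rewrite {1}(u_R1 pi1 pi2 v1 dj lt eT) {1}(u_R2 pi1 pi2 v1 t2 dj lt eT).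
rewrite (u_V1 partP piT vV pi1 pi2 v1 t2 dj lt c1 eT) (u_V2 partP piT vV pi1 pi2 v1 t2 dj lt c1 eT).
by rewrite {1}(u_t partP piT vV pi1 pi2 v1 t2 dj lt c1 eT).
Qed.

Unset Implicit Arguments.

Theorem lemma3p10 (r : nat) (P : {set {set 'I_r.+1}}) (T : tree r) :
  2 <= r ->
  partition P [set i : 'I_r.+1 | 0 < i] ->
  [set (inord 1 : 'I_r.+1)] \in P ->
  pi_incr P T ->
  2 <= #|blocks_in P T| ->
  let M := maxv (tV T) in
  let m := maxv (tV T :\: pblock P M) in
  (reducible P T ->
     (exists! p : tree r * tree r * 'I_r.+1,
        let '(T1, T2, t) := p in
        pi_incr P T1 /\ pi_incr P T2 /\ M \in tV T1 /\ t \in tV T2 /\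
        [disjoint tV T1 & tV T2] /\ t < M /\ irreducible P T1 /\
        T = spl T1 M T2 t)
     /\
     (forall (T1 T2 : tree r) (t : 'I_r.+1),
        (pi_incr P T1 /\ pi_incr P T2 /\ M \in tV T1 /\ t \in tV T2 /\
        [disjoint tV T1 & tV T2] /\ t < M /\ irreducible P T1 /\
        T = spl T1 M T2 t) ->
        (inord 1 : 'I_r.+1) \in tV T -> (inord 1 : 'I_r.+1) \in tV T2))
  /\
  (irreducible P T ->
     exists! p : tree r * tree r * 'I_r.+1,
        let '(T1, T2, t) := p in
        pi_incr P T1 /\ pi_incr P T2 /\ m \in tV T1 /\ t \in tV T2 /\
        M \in tV T2 /\ t < m /\ [disjoint tV T1 & tV T2] /\
        irreducible P T1 /\ irreducible P T2 /\ T = spl T1 m T2 t).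
Proof.
move=> hr partP one piT two M m.
have inc := incT piT.
have tVn0 : tV T != set0 by case/and4P: inc.
have MV : M \in tV T by case/set0Pn: tVn0 => x xV; exact: (maxv_in xV).
have Mmax : forall x, x \in tV T -> x <= M by move=> x; exact: maxv_ge.
have [B0 B0in B0ne] : exists2 B, B \in blocks_in P T & B != pblock P M.
  case: (boolP [exists B in blocks_in P T, B != pblock P M]) => [/exists_inP[B h1 h2]|ne].
    by exists B.
  have : blocks_in P T \subset [set pblock P M].
    apply/subsetP => B Bin; rewrite inE; apply: contraR ne => h.
    by apply/exists_inP; exists B.
  by move/subset_leq_card; rewrite cards1; have := two; lia.
have B0P : B0 \in P by move: B0in; rewrite blocks_inP => /andP[].
have B0V : B0 \subset tV T by move: B0in; rewrite blocks_inP => /andP[].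
case: (blk_ne partP B0P) => y0 y0B.
have y0V : y0 \in tV T := subsetP B0V _ y0B.
have y0M : y0 \notin pblock P M.
  apply/negP => h; move: B0ne; rewrite -(blk_eq partP B0P y0B).
  by rewrite (blk_eq partP (blk_P partP piT MV) h) eqxx.
have mD : m \in tV T :\: pblock P M by apply: (maxv_in (x := y0)); rewrite in_setD y0M.
have mV : m \in tV T by move: mD; rewrite in_setD => /andP[].
have mM : m \notin pblock P M by move: mD; rewrite in_setD => /andP[].
have mmax : forall x, x \in tV T -> x \notin pblock P M -> x <= m.
  by move=> x xV xM; apply: maxv_ge; rewrite in_setD xM.
split.
- move=> red.
  have V2n0 : V2c P T M != set0.
    apply/negP => /eqP e; move: red; rewrite /reducible => /negP; apply; rewrite /irreducible -/M.
    have inX : forall B, B \in blocks_in P T -> B \in Xc P T M.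
      move=> B Bin; have := Bin; rewrite blocks_inP => /andP[BP BV].
      case: (blk_ne partP BP) => x xB; have xV := subsetP BV _ xB.
      have : x \in V1c P T M :|: V2c P T M by rewrite V12.
      by rewrite e setU0 V1P (blk_eq partP BP xB) => /andP[].
    rewrite dep_connectedE; apply/forall_inP => B1 B1in; apply/forall_inP => B2 B2in.
    have := inX _ B1in; have := inX _ B2in; rewrite /Xc !inE => h2 h1.
    by apply: connect_trans h2; rewrite erel_sym.
  have maxV1 : maxv (V1c P T M) = M.
    apply: maxv_eq; first exact: v_V1.
    by move=> x /(subsetP (V1sub P T M)); exact: Mmax.
  have conds : forall T1 T2 t,
    pi_incr P T1 /\ pi_incr P T2 /\ M \in tV T1 /\ t \in tV T2 /\
        [disjoint tV T1 & tV T2] /\ t < M /\ irreducible P T1 /\ T = spl T1 M T2 t ->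
    (T1, T2, t) = (restr T M (V1c P T M), restr T M (V2c P T M), tc P T M).
    move=> T1 T2 t [pi1 [pi2 [M1 [t2 [dj [lt [irr1 eT]]]]]]].
    have mx : maxv (tV T1) = M.
      apply: maxv_eq => // x x1; apply: Mmax.
      by rewrite eT /= in_setU x1.
    move: irr1; rewrite /irreducible mx => c1.
    exact: uniq_all.
  split.
  + exists (restr T M (V1c P T M), restr T M (V2c P T M), tc P T M); split.
      have [tC tV2] := tc_spec partP piT MV V2n0.
      split; first exact: exist_pi1.
      split; first exact: exist_pi2.
      split; first exact: v_V1.
      split; first exact: tV2.
      split; first exact: V12disj.
      split; first exact: tc_lt.
      split; first by rewrite /irreducible /= maxV1; exact: exist_conn.
      exact: exist_spl.
    move=> [[T1 T2] t] h; apply/esym; exact: conds.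
  + move=> T1 T2 t h one_in.
    have e := conds _ _ _ h; case: e => e1 e2 e3.
    rewrite e2 R_V V2P one_in andTb.
    have oneV : (inord 1 : 'I_r.+1) \in [set inord 1] by rewrite set11.
    rewrite (blk_eq partP one oneV) /Xc inE.
    have f1 : nxt P T M (pblock P M) = pblock P M.
      by rewrite /nxt (MB partP piT MV Mmax) chain_self.
    have val1 : ((inord 1 : 'I_r.+1) : nat) = 1 by rewrite inordK // ltnS (leq_trans _ hr).
    have f2 : nxt P T M [set inord 1] = [set inord 1].
      have mx1 : maxv [set (inord 1 : 'I_r.+1)] = inord 1.
        by apply: maxv_eq => // x; rewrite inE => /eqP->.
      rewrite /nxt mx1; case: (root_ex inc) => x0 [x0V f0 _].
      have x01 : x0 = inord 1.
        apply: val_inj; change (nat_of_ord x0 = nat_of_ord (inord 1 : 'I_r.+1)); rewrite val1.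
        have := anc_le inc (root_anc inc x0V f0 one_in); rewrite val1.
        have := posT partP piT x0V; rewrite (coverP partP) inE.
        by case: (nat_of_ord x0) => [|[|]].
      by rewrite -x01 (chain_root inc MV x0V f0).
    apply: (sink_sep partP piT MV (blk_in partP piT MV) f1 f2).
    apply/negP => /eqP e; have : M \in [set (inord 1 : 'I_r.+1)].
      by rewrite -e (blk_mem partP piT MV).
    rewrite inE => /eqP/(congr1 (@nat_of_ord _)); rewrite val1 => eM.
    have := m_lt_M partP piT MV Mmax mV mM; have := posT partP piT mV.
    rewrite (coverP partP) inE eM.
    by case: (nat_of_ord m) => [|[|]].
- move=> irrT.
  have irr : dep_connected P T M by move: irrT; rewrite /irreducible.
  have M2 := V2M partP piT MV Mmax mV mM mmax irr.
  have V2n0 : V2c P T m != set0 by apply/set0Pn; exists M.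
  have MnX := M_notX partP piT MV Mmax mV mM mmax irr.
  have maxV1 : maxv (V1c P T m) = m.
    apply: maxv_eq; first exact: v_V1.
    move=> x; rewrite V1P => /andP[xV xX]; apply: mmax => //.
    apply/negP => xM; move: MnX.
    by rewrite -(blk_eq partP (blk_P partP piT MV) xM) xX.
  have maxV2 : maxv (V2c P T m) = M.
    apply: maxv_eq => // x /(subsetP (V2sub P T m)); exact: Mmax.
  exists (restr T m (V1c P T m), restr T m (V2c P T m), tc P T m); split.
    have [tC tV2] := tc_spec partP piT mV V2n0.
    split; first exact: exist_pi1.
    split; first exact: exist_pi2.
    split; first exact: v_V1.
    split; first exact: tV2.
    split; first exact: M2.
    split; first exact: tc_lt.
    split; first exact: V12disj.
    split; first by rewrite /irreducible /= maxV1; exact: exist_conn.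
    split; first by rewrite /irreducible /= maxV2; exact: (T2_conn partP piT MV Mmax mV mM mmax irr).
    exact: exist_spl.
  move=> [[T1 T2] t] [pi1 [pi2 [m1 [t2 [M2' [lt [dj [irr1 [irr2 eT]]]]]]]]].
  have mx : maxv (tV T1) = m.
    apply: maxv_eq => // x x1.
    have xV : x \in tV T by rewrite eT /= in_setU x1.
    apply: mmax => //; apply/negP => xM.
    have sub := blk_sub_of pi2 (blk_P partP piT MV) (blk_mem partP piT MV) M2'.
    move: dj; rewrite disjoint_subset => /subsetP/(_ x x1); rewrite inE.
    by rewrite (subsetP sub).
  move: irr1; rewrite /irreducible mx => c1.
  apply/esym; exact: uniq_all.
Qed.
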